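(* Let $D\subset\Phi^+$ be an orthogonal subset satisfying Assumption (A). (a) Let $\beta\in D\cap\mathcal C_j$, $\alpha\in S^+(\beta)$, and suppose $\beta-\alpha\in\mathcal M_j$. Then every $\beta'\in D$ of the form $\beta'=\alpha+\delta$ with $\delta\in\Phi^+$ lies in $\mathcal C_j$. (b) Suppose $|D\cap\mathcal C_j|=2$, say $D\cap\mathcal C_j=\{\beta,\beta'\}$, let $\gamma\in\mathcal M_j$ with $\mathrm{col}(\gamma)\ne\pm\mathrm{row}(\beta)$. Then every root of $D$ of the form $\gamma+\delta$ with $\delta\in\mathcal P$ lies in $\mathcal C_j$.
   Context: Let $\Phi$ be a root system of type $B_n$, $C_n$ or $D_n$ in $\mathbb R^n$ with standard basis $\varepsilon_1,\dots,\varepsilon_n$ and positive roots $\Phi^+=\{\varepsilon_i\pm\varepsilon_j:1\le i<j\le n\}\cup\Phi_1^+$, where $\Phi_1^+=\emptyset$ for $D_n$, $\{\varepsilon_i\}$ for $B_n$, $\{2\varepsilon_i\}$ for $C_n$. $D\subset\Phi^+$ is orthogonal if its roots are pairwise orthogonal. Assumption (A): if $\Phi=B_n$, $D$ contains at most one root of the form $\varepsilon_i$; if $\Phi=C_n$, $D$ does not contain both $\varepsilon_i-\varepsilon_j$ and $\varepsilon_i+\varepsilon_j$ for any $i<j$. $\mathrm{col}(\varepsilon_i\pm\varepsilon_j)=\mathrm{col}(\varepsilon_i)=\mathrm{col}(2\varepsilon_i)=i$; $\mathrm{row}(\varepsilon_i\pm\varepsilon_j)=\mp j$, $\mathrm{row}(\varepsilon_i)=0$,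 $\mathrm{row}(2\varepsilon_i)=-i$. $\mathcal R_i=\{\alpha\in\Phi^+:\mathrm{row}(\alpha)=i\}$, $\mathcal C_j=\{\alpha\in\Phi^+:\mathrm{col}(\alpha)=j\}$. For $\beta\in\Phi^+$, $S(\beta)=\{\alpha\in\Phi^+:\beta-\alpha\in\Phi^+\}$; $S^+(\beta)=\{\varepsilon_i+\varepsilon_l:i<l\le n\}$ if $\Phi=C_n$ and $\beta=2\varepsilon_i$, and $S^+(\beta)=S(\beta)\cap\mathcal C_{\mathrm{col}(\beta)}$ otherwise; $S^-(\beta)=S(\beta)\setminus S^+(\beta)$. Let $j_1<\dots<j_t$ be the indices of columns containing roots of $D$; recursively $\mathcal M_{j_i}=\{\gamma\in S^-(\beta):\beta\in D\cap\mathcal C_{j_i},\ \gamma\notin\bigcup_{l<i}\mathcal M_{j_l},\ \beta-\gamma\notin\bigcup_{l<i}\mathcal M_{j_l}\}$, and $\mathcal M_j=\emptyset$ for columns $j$ containing no root of $D$; $\mathcal M=\bigcup_i\mathcal M_{j_i}$, $\mathcal P=\Phi^+\setminus\mathcal M$. *)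

(* Defs.v *)
From mathcomp Require Import all_boot all_order all_algebra.
Set Implicit Arguments. Unset Strict Implicit. Unset Printing Implicit Defensive.
Import GRing.Theory Num.Theory.
Local Open Scope ring_scope.

Inductive rtype := TB | TC | TD.

(* Candidate positive roots, indices are 1-based (eps_1,...,eps_n). *)
Inductive proot :=
| Rm of nat & nat   (* Rm i j = eps_i - eps_j *)
| Rp of nat & nat   (* Rp i j = eps_i + eps_j *)
| Rs of nat         (* Rs i   = eps_i   (type B) *)
| Rl of nat.        (* Rl i   = 2 eps_i (type C) *)

Definition isPos (t : rtype) (n : nat) (r : proot) : Prop :=
  match r with
  | Rm i j | Rp i j => (1 <= i)%N /\ (i < j)%N /\ (j <= n)%N
  | Rs i => t = TB /\ (1 <= i <= n)%N
  | Rl i => t = TC /\ (1 <= i <= n)%N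
  end.

Definition vec (r : proot) (k : nat) : int :=
  match r with
  | Rm i j => (k == i)%:Z - (k == j)%:Z
  | Rp i j => (k == i)%:Z + (k == j)%:Z
  | Rs i => (k == i)%:Z
  | Rl i => 2 * (k == i)%:Z
  end.

Definition dot (n : nat) (a b : proot) : int :=
  \sum_(1 <= k < n.+1) vec a k * vec b k.

Definition rcol (r : proot) : nat :=
  match r with Rm i _ | Rp i _ | Rs i | Rl i => i end.

Definition rrow (r : proot) : int :=
  match r with
  | Rm _ j => j%:Z
  | Rp _ j => - j%:Z
  | Rs _ => 0
  | Rl i => - i%:Z
  end.

Definition is_diff (r a b : proot) : Prop := forall k, vec r k = vec a k - vec b k.
Definition is_sum (r a b : proot) : Prop := forall k, vec r k = vec a k + vec b k.

Definition S_ (t : rtype) (n : nat) (beta a : proot) : Prop :=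
  isPos t n a /\ exists r, isPos t n r /\ is_diff r beta a.

Definition Splus (t : rtype) (n : nat) (beta a : proot) : Prop :=
  match t, beta with
  | TC, Rl i => exists l, (i < l <= n)%N /\ a = Rp i l
  | _, _ => S_ t n beta a /\ rcol a = rcol beta
  end.

Definition Sminus (t : rtype) (n : nat) (beta a : proot) : Prop :=
  S_ t n beta a /\ ~ Splus t n beta a.

Definition orthogonal_set (t : rtype) (n : nat) (D : proot -> Prop) : Prop :=
  (forall r, D r -> isPos t n r) /\
  (forall a b, D a -> D b -> a <> b -> dot n a b = 0).

Definition assumptionA (t : rtype) (D : proot -> Prop) : Prop :=
  (t = TB -> forall i k, D (Rs i) -> D (Rs k) -> i = k) /\
  (t = TC -> forall i j, (i < j)%N -> ~ (D (Rm i j) /\ D (Rp i j))).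

(* One step of the recursive construction of M_j, given the union U of
   the previously constructed M_l (l < j). *)
Definition Mstep (t : rtype) (n : nat) (D : proot -> Prop)
    (U : proot -> Prop) (j : nat) (g : proot) : Prop :=
  exists beta, D beta /\ rcol beta = j /\ Sminus t n beta g /\ ~ U g /\
    (forall r, isPos t n r -> is_diff r beta g -> ~ U r).

(* Mlt k = union of the M_l for l < k. Columns with no proot of D
   contribute the empty set, so this agrees with the union over the
   earlier columns j_l containing roots of D. *)
Fixpoint Mlt (t : rtype) (n : nat) (D : proot -> Prop) (k : nat) : proot -> Prop :=
  match k with
  | 0 => fun _ => False
  | k'.+1 => fun g => Mlt t n D k' g \/ Mstep t n D (Mlt t n D k') k' g
  end.

Definition Mcol (t : rtype) (n : nat) (D : proot -> Prop) (j : nat) (g : proot) : Prop :=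
  Mstep t n D (Mlt t n D j) j g.

Definition Mset (t : rtype) (n : nat) (D : proot -> Prop) (g : proot) : Prop :=
  exists j, Mcol t n D j g.
Definition Pset (t : rtype) (n : nat) (D : proot -> Prop) (g : proot) : Prop :=
  isPos t n g /\ ~ Mset t n D g.

(* Main.v *)
Require Import Defs.
From Stdlib Require Import ZArith Lia Classical.
From mathcomp Require Import all_boot all_order all_algebra.
Import GRing.Theory Num.Theory.
Local Open Scope ring_scope.
Open Scope Z_scope.
Definition zi (x : int) : Z :=
  match x with Posz m => Z.of_nat m | Negz m => (- Z.of_nat m - 1) end.
Lemma zi_add x y : zi (x + y)%R = zi x + zi y.
Proof.
case: x => a; case: y => b; rewrite /GRing.add /= /intZmod.addz.
all: try (case: ltnP => H; move/leP: H => H).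
all: rewrite /zi -?plusE -?minusE; lia.
Qed.
Lemma zi_opp x : zi (- x)%R = - zi x.
Proof.
case: x => [[|a]|a]; rewrite /GRing.opp /= /intZmod.oppz /zi; lia.
Qed.
Lemma zi_sub x y : zi (x - y)%R = zi x - zi y.
Proof. by rewrite zi_add zi_opp; lia. Qed.
Lemma zi_inj x y : zi x = zi y -> x = y.
Proof. case: x => a; case: y => b /=; move=> H; f_equal; lia. Qed.
Definition b2z (b : bool) : Z := if b then 1 else 0.
Definition vz (r : proot) (k : nat) : Z :=
  match r with
  | Rm i j => b2z (Nat.eqb k i) - b2z (Nat.eqb k j)
  | Rp i j => b2z (Nat.eqb k i) + b2z (Nat.eqb k j)
  | Rs i => b2z (Nat.eqb k i)
  | Rl i => 2 * b2z (Nat.eqb k i)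
  end.
Lemma eqnb (k i : nat) : (k == i) = Nat.eqb k i.
Proof. by case: eqP; case: Nat.eqb_spec. Qed.
Lemma zi_b (b : bool) : zi (b%:Z)%R = b2z b.
Proof. by case: b. Qed.
Lemma zi_vec r k : zi (vec r k) = vz r k.
Proof.
case: r => [i j|i j|i|i]; rewrite /vec /vz.
- by rewrite zi_sub !zi_b !eqnb.
- by rewrite zi_add !zi_b !eqnb.
- by rewrite !zi_b !eqnb.
- by rewrite -eqnb; case: (k == i).
Qed.

Definition isPosP (t : rtype) (n : nat) (r : proot) : Prop :=
  match r with
  | Rm i j | Rp i j => (1 <= i /\ i < j /\ j <= n)%coq_nat
  | Rs i => t = TB /\ (1 <= i /\ i <= n)%coq_nat
  | Rl i => t = TC /\ (1 <= i /\ i <= n)%coq_nat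
  end.
Lemma isPosP_of t n r : isPos t n r -> isPosP t n r.
Proof.
case: r => [i j|i j|i|i] /=.
- by case=> /leP ? [/leP ? /leP ?].
- by case=> /leP ? [/leP ? /leP ?].
- by case=> ? /andP [/leP ? /leP ?].
- by case=> ? /andP [/leP ? /leP ?].
Qed.
Lemma isPos_of t n r : isPosP t n r -> isPos t n r.
Proof.
case: r => [i j|i j|i|i] /=.
- by case=> /leP ? [/leP ? /leP ?].
- by case=> /leP ? [/leP ? /leP ?].
- by case=> ? [/leP ? /leP ?]; split=> //; apply/andP.
- by case=> ? [/leP ? /leP ?]; split=> //; apply/andP.
Qed.

Ltac split_eqb :=
  match goal with
  | H : context [Nat.eqb ?a ?b] |- _ => let E := fresh "Heq" in
      destruct (Nat.eqb_spec a b) as [E|?]; [revert E; first [intros -> | intros ?] | ]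
  | |- context [Nat.eqb ?a ?b] => let E := fresh "Heq" in
      destruct (Nat.eqb_spec a b) as [E|?]; [revert E; first [intros -> | intros ?] | ]
  end.
Ltac close := first [ lia | discriminate | (f_equal; lia) | match goal with H : ?a <> ?a |- _ => by case: H end
  | (split; close) | (left; close) | (right; close) ].
Ltac brute2 := repeat (first [ close | split_eqb | progress (cbn [b2z] in * |- * )]).

Definition idx (r : proot) : list nat :=
  match r with Rm i j | Rp i j => i :: j :: nil | Rs i | Rl i => i :: nil end.
Fixpoint allL (P : nat -> Prop) (l : list nat) : Prop :=
  match l with nil => True | x :: l' => P x /\ allL P l' end.
Lemma allL_of (P : nat -> Prop) l : (forall k, P k) -> allL P l.
Proof. move=> H; elim: l => //= x l IH; split=> //. Qed.
Definition dzf (a : proot) (f : nat -> Z) : Z :=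
  match a with
  | Rm i j => f i - f j | Rp i j => f i + f j | Rs i => f i | Rl i => 2 * f i
  end.

Ltac specE E l := let H := fresh "S" in have H := @allL_of _ l E.
Ltac prep := cbn [allL idx cat app vz b2z isPosP rcol dzf] in * |- * ;
  repeat match goal with H : _ /\ _ |- _ => destruct H end;
  repeat match goal with H : ?x = ?y |- _ => is_var x; is_var y; subst x end.
Lemma A2 t n b r l j : isPosP t n b -> isPosP t n r -> (rcol b < l)%coq_nat -> (l < j)%coq_nat ->
  (forall k, vz r k = vz b k - vz (Rm l j) k) ->
  b = Rm (rcol b) j \/ b = Rp (rcol b) l.
Proof.
move=> Hb Hr Hl Hlj E.
specE E (idx b ++ idx r ++ idx (Rm l j)); clear E.
case: b Hb Hl S => [x y|x y|x|x] Hb Hl S; case: r Hr S => [u v|u v|u|u] Hr S;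
  prep; brute2.
Qed.

Lemma sum_pick n i (f : nat -> int) : (1 <= i <= n)%N ->
  (\sum_(1 <= k < n.+1) (k == i)%:Z * f k)%R = f i.
Proof.
move=> Hi.
rewrite (bigD1_seq i) /=; last by rewrite iota_uniq.
  rewrite eqxx mul1r big1 ?addr0 // => k /negPf ->; by rewrite mul0r.
by rewrite mem_iota; case/andP: Hi => H1 H2; rewrite H1 /= subnKC // ltnS.
Qed.

Lemma dot_sym n a b : dot n a b = dot n b a.
Proof. by apply: eq_bigr => k _; rewrite mulrC. Qed.

Lemma dotE t n a b : isPos t n a -> zi (dot n a b) = dzf a (vz b).
Proof.
rewrite /dot; case: a => [i j|i j|i|i] /=.
- case=> H1 [H2 H3].
  have Hi : (1 <= i <= n)%N by rewrite H1 (leq_trans (ltnW H2) H3).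
  have Hj : (1 <= j <= n)%N by rewrite H3 andbT (leq_trans H1 (ltnW H2)).
  under eq_bigr do rewrite mulrBl.
  by rewrite sumrB !sum_pick // zi_sub !zi_vec.
- case=> H1 [H2 H3].
  have Hi : (1 <= i <= n)%N by rewrite H1 (leq_trans (ltnW H2) H3).
  have Hj : (1 <= j <= n)%N by rewrite H3 andbT (leq_trans H1 (ltnW H2)).
  under eq_bigr do rewrite mulrDl.
  by rewrite big_split /= !sum_pick // zi_add !zi_vec.
- case=> _ Hi. by rewrite sum_pick // zi_vec.
- case=> _ Hi.
  under eq_bigr do rewrite -mulrA.
  rewrite -mulr_sumr sum_pick // -[2%R]/(1 + 1)%R mulrDl mul1r zi_add zi_vec; change (vz b i + vz b i = 2 * vz b i); lia.
Qed.

Lemma pos_col t n r : isPosP t n r ->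
  0 < vz r (rcol r) /\ forall k, (k < rcol r)%coq_nat -> vz r k = 0.
Proof.
case: r => [x y|x y|x|x] H; split; try move=> k Hk; prep; brute2.
Qed.

Lemma vz_inj t n r r' : isPosP t n r -> isPosP t n r' ->
  (forall k, vz r k = vz r' k) -> r = r'.
Proof.
move=> Hr Hr' E; specE E (idx r ++ idx r'); clear E.
case: r Hr S => [x y|x y|x|x] Hr S; case: r' Hr' S => [u v|u v|u|u] Hr' S;
  prep; brute2.
Qed.

Lemma colsum t n r a b : isPosP t n r -> isPosP t n a -> isPosP t n b ->
  (forall k, vz r k = vz a k + vz b k) -> rcol r = Nat.min (rcol a) (rcol b).
Proof.
move=> Hr Ha Hb E.
have [pr zr] := pos_col _ _ _ Hr; have [pa za] := pos_col _ _ _ Ha; have [pb zb] := pos_col _ _ _ Hb.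
have Hm := E (Nat.min (rcol a) (rcol b)).
have Hc := E (rcol r).
destruct (Nat.lt_total (rcol a) (rcol b)) as [h|[h|h]].
- rewrite Nat.min_l in Hm *; last lia.
  rewrite (zb (rcol a) h) in Hm.
  destruct (Nat.lt_total (rcol r) (rcol a)) as [h2|[h2|h2]]; try lia.
  + rewrite (za _ h2) (zb (rcol r) ltac:(lia)) in Hc; lia.
  + rewrite (zr _ h2) in Hm; lia.
- rewrite Nat.min_l in Hm *; last lia.
  destruct (Nat.lt_total (rcol r) (rcol a)) as [h2|[h2|h2]]; try lia.
  + rewrite (za _ h2) (zb (rcol r) ltac:(lia)) in Hc; lia.
  + rewrite (zr _ h2) in Hm; rewrite -h in pb; lia.
- rewrite Nat.min_r in Hm *; last lia.
  rewrite (za (rcol b) h) in Hm.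
  destruct (Nat.lt_total (rcol r) (rcol b)) as [h2|[h2|h2]]; try lia.
  + rewrite (zb _ h2) (za (rcol r) ltac:(lia)) in Hc; lia.
  + rewrite (zr _ h2) in Hm; lia.
Qed.

Definition snd_idx (r : proot) : nat :=
  match r with Rm _ j | Rp _ j => j | Rs i | Rl i => i end.

Lemma A1 t n a d b' j (f : nat -> Z) : isPosP t n a -> isPosP t n d -> isPosP t n b' ->
  rcol a = j -> (rcol d < j)%coq_nat -> (forall k, vz b' k = vz a k + vz d k) ->
  0 < f j -> f (rcol d) = 0 -> dzf b' f = 0 -> d = Rm (rcol d) j.
Proof.
move=> Ha Hd Hb E0 Hl E Hf1 Hf2 Hf3; specE E (idx a ++ idx d ++ idx b'); clear E.
case: a Ha E0 S => [x y|x y|x|x] Ha E0 S; case: d Hd Hl Hf2 S => [u v|u v|u|u] Hd Hl Hf2 S;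
  case: b' Hb Hf3 S => [p q|p q|p|p] Hb Hf3 S; prep; brute2.
Qed.

Lemma A0 t n b a g b0 r0 : isPosP t n b -> isPosP t n a -> isPosP t n g ->
  isPosP t n b0 -> isPosP t n r0 ->
  rcol a = rcol b -> (forall k, vz g k = vz b k - vz a k) ->
  rcol b0 = rcol b -> (forall k, vz r0 k = vz b0 k - vz g k) ->
  dzf b0 (vz b) = 0 -> b0 = b.
Proof.
move=> Hb Ha Hg Hb0 Hr0 Ec E1 Ec0 E2 Ed.
specE E1 (idx g ++ idx b ++ idx a); clear E1.
specE E2 (idx r0 ++ idx b0 ++ idx g); clear E2.
case: b Hb Ec Ec0 Ed S => [x y|x y|x|x] Hb Ec Ec0 Ed S;
case: a Ha Ec S => [u v|u v|u|u] Ha Ec S;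
case: g Hg S S0 => [p q|p q|p|p] Hg S S0; prep; brute2;
case: b0 Hb0 Ec0 Ed S0 => [c d|c d|c|c] Hb0 Ec0 Ed S0;
case: r0 Hr0 S0 => [e f|e f|e|e] Hr0 S0; prep; brute2.
Qed.

Lemma B0 t n b b' : isPosP t n b -> isPosP t n b' -> rcol b = rcol b' ->
  dzf b (vz b') = 0 ->
  (b = Rm (rcol b) (snd_idx b) /\ b' = Rp (rcol b) (snd_idx b)) \/
  (b = Rp (rcol b) (snd_idx b) /\ b' = Rm (rcol b) (snd_idx b)).
Proof.
move=> Hb Hb' Ec Ed.
case: b Hb Ec Ed => [x y|x y|x|x] Hb Ec Ed;
case: b' Hb' Ec Ed => [u v|u v|u|u] Hb' Ec Ed; prep; brute2.
Qed.

Lemma B1m t n j k g r : isPosP t n g -> isPosP t n r -> (j < k)%coq_nat ->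
  (forall i, vz r i = vz (Rm j k) i - vz g i) -> rcol g <> j ->
  g = Rm (rcol g) k /\ (j < rcol g)%coq_nat /\ (rcol g < k)%coq_nat.
Proof.
move=> Hg Hr Hjk E Hc; specE E (idx g ++ idx r ++ idx (Rm j k)); clear E.
case: g Hg Hc S => [x y|x y|x|x] Hg Hc S; case: r Hr S => [u v|u v|u|u] Hr S;
  prep; brute2.
Qed.

Lemma B1p t n j k g r : isPosP t n g -> isPosP t n r -> (j < k)%coq_nat ->
  (forall i, vz r i = vz (Rp j k) i - vz g i) -> rcol g <> j -> rcol g <> k ->
  g = Rp (rcol g) k /\ (j < rcol g)%coq_nat /\ (rcol g < k)%coq_nat.
Proof.
move=> Hg Hr Hjk E Hc Hc'; specE E (idx g ++ idx r ++ idx (Rp j k)); clear E.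
case: g Hg Hc Hc' S => [x y|x y|x|x] Hg Hc Hc' S; case: r Hr S => [u v|u v|u|u] Hr S;
  prep; brute2.
Qed.

Lemma VD_of r a b : is_diff r a b -> forall k, vz r k = vz a k - vz b k.
Proof. by move=> H k; rewrite -!zi_vec H zi_sub. Qed.
Lemma VS_of r a b : is_sum r a b -> forall k, vz r k = vz a k + vz b k.
Proof. by move=> H k; rewrite -!zi_vec H zi_add. Qed.
Lemma of_VD r a b : (forall k, vz r k = vz a k - vz b k) -> is_diff r a b.
Proof. by move=> H k; apply: zi_inj; rewrite zi_sub !zi_vec H. Qed.
Lemma dz0 t n a b : isPos t n a -> dot n a b = 0%R -> dzf a (vz b) = 0.
Proof. by move=> Ha H; rewrite -(dotE _ _ _ _ Ha) H. Qed.
Ltac prep2 := prep; repeat match goal with H : ?x = ?c |- _ => is_var x;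
  lazymatch type of x with rtype => subst x end end.

Lemma B2m t n j x k rho d : t <> TC -> (j < x)%coq_nat -> (x < k)%coq_nat ->
  isPosP t n rho -> isPosP t n d ->
  (forall i, vz rho i = vz (Rm x k) i + vz d i) -> vz rho j = 0 -> vz rho k = 0 ->
  (j < rcol d)%coq_nat ->
  (d = Rp k (snd_idx d) /\ rho = Rp x (snd_idx d))
  \/ (d = Rp (rcol d) k /\ (rho = Rp x (rcol d) \/ rho = Rp (rcol d) x))
  \/ (d = Rm k (snd_idx d) /\ rho = Rm x (snd_idx d))
  \/ (d = Rs k /\ rho = Rs x).
Proof.
move=> Ht Hjx Hxk Hr Hd E Ej Ek Hc; specE E (idx rho ++ idx d ++ idx (Rm x k)); clear E.
case: rho Hr Ej Ek S => [u v|u v|u|u] Hr Ej Ek S; case: d Hd Hc S => [p q|p q|p|p] Hd Hc S;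
  prep2; brute2.
Qed.

Lemma B2p t n j x k rho d : t <> TC -> (j < x)%coq_nat -> (x < k)%coq_nat ->
  isPosP t n rho -> isPosP t n d ->
  (forall i, vz rho i = vz (Rp x k) i + vz d i) -> vz rho j = 0 -> vz rho k = 0 ->
  (j < rcol d)%coq_nat ->
  d = Rm (rcol d) k /\ (rho = Rp x (rcol d) \/ rho = Rp (rcol d) x).
Proof.
move=> Ht Hjx Hxk Hr Hd E Ej Ek Hc; specE E (idx rho ++ idx d ++ idx (Rp x k)); clear E.
case: rho Hr Ej Ek S => [u v|u v|u|u] Hr Ej Ek S; case: d Hd Hc S => [p q|p q|p|p] Hd Hc S;
  prep2; brute2.
Qed.

Lemma B3m t n j k x y rho b r : isPosP t n b -> isPosP t n r ->
  (forall i, vz r i = vz b i - vz (Rm j y) i) -> (rcol b < j)%coq_nat ->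
  (j < k)%coq_nat -> (j < x)%coq_nat -> (j < y)%coq_nat ->
  (rho = Rp x y \/ rho = Rp y x) ->
  dzf b (vz rho) = 0 -> dzf b (vz (Rp j k)) = 0 -> False.
Proof.
move=> Hb Hr E Hc Hjk Hjx Hjy Hrho D1 D2; specE E (idx b ++ idx r ++ idx (Rm j y)); clear E.
case: Hrho => ->{rho} in D1 *;
case: b Hb Hc D1 D2 S => [u v|u v|u|u] Hb Hc D1 D2 S; case: r Hr S => [p q|p q|p|p] Hr S;
  prep2; brute2.
Qed.

Lemma B3p t n j k x y b r : isPosP t n b -> isPosP t n r ->
  (forall i, vz r i = vz b i - vz (Rp j y) i) -> (rcol b < j)%coq_nat ->
  (j < k)%coq_nat -> (j < x)%coq_nat -> (x < y)%coq_nat ->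
  dzf b (vz (Rm x y)) = 0 -> dzf b (vz (Rp j k)) = 0 -> False.
Proof.
move=> Hb Hr E Hc Hjk Hjx Hxy D1 D2; specE E (idx b ++ idx r ++ idx (Rp j y)); clear E.
case: b Hb Hc D1 D2 S => [u v|u v|u|u] Hb Hc D1 D2 S; case: r Hr S => [p q|p q|p|p] Hr S;
  prep2; brute2.
Qed.

Lemma B3s t n j k x b r : isPosP t n b -> isPosP t n r ->
  (forall i, vz r i = vz b i - vz (Rs j) i) -> (rcol b < j)%coq_nat ->
  (j < k)%coq_nat -> (j < x)%coq_nat ->
  (match b with Rs i => i = x | _ => True end) ->
  dzf b (vz (Rp j k)) = 0 -> False.
Proof.
move=> Hb Hr E Hc Hjk Hjx HA D2; specE E (idx b ++ idx r ++ idx (Rs j)); clear E.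
case: b Hb Hc HA D2 S => [u v|u v|u|u] Hb Hc HA D2 S; case: r Hr S => [p q|p q|p|p] Hr S;
  prep2; brute2.
Qed.

Close Scope Z_scope.
Arguments VD_of {r a b}.
Arguments VS_of {r a b}.
Arguments of_VD {r a b}.

Lemma Mlt_mono t n D k d g : Mlt t n D k g -> Mlt t n D (k + d) g.
Proof. elim: d => [|d IH] H; first by rewrite addn0. by rewrite addnS /=; left; apply: IH. Qed.
Arguments Mlt_mono {t n D k d g}.

Lemma Mlt_le t n D k k' g : (k <= k')%N -> Mlt t n D k g -> Mlt t n D k' g.
Proof. by move=> /subnKC <-; apply: Mlt_mono. Qed.
Arguments Mlt_le {t n D k k' g}.

Lemma Mcol_Mlt t n D l k g : Mcol t n D l g -> (l < k)%N -> Mlt t n D k g.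
Proof. move=> H Hl; apply: (Mlt_le Hl); by right. Qed.
Arguments Mcol_Mlt {t n D l k g}.

Lemma Mlt_ex t n D k g : Mlt t n D k g -> exists l, (l < k)%N /\ Mcol t n D l g.
Proof.
elim: k => [|k IH] //= [H|H].
- by case: (IH H) => l [Hl Hc]; exists l; split => //; apply: ltnW.
- by exists k.
Qed.
Arguments Mlt_ex {t n D k g}.

Lemma Mlt_Mset t n D k g : Mlt t n D k g -> Mset t n D g.
Proof. by case/Mlt_ex => l [_ H]; exists l. Qed.
Arguments Mlt_Mset {t n D k g}.

Lemma diff_uniq t n b g r r' : isPos t n r -> isPos t n r' -> is_diff r b g -> is_diff r' b g -> r = r'.
Proof.
move=> Hr Hr' E E'; apply: (vz_inj _ _ _ _ (isPosP_of _ _ _ Hr) (isPosP_of _ _ _ Hr')) => k.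
by rewrite (VD_of E) (VD_of E').
Qed.
Arguments diff_uniq {t n b g r r'}.

Lemma F2 t n D b0 l g r : D b0 -> rcol b0 = l -> Sminus t n b0 g -> isPos t n r ->
  is_diff r b0 g -> Mlt t n D l.+1 g \/ Mlt t n D l r.
Proof.
move=> Db Hc Hs Hr E.
case: (classic (Mlt t n D l g)) => H1; first by left; left.
case: (classic (Mlt t n D l r)) => H2; first by right.
left; right; exists b0; do 4! (split => //).
by move=> r' Hr' E' HU; apply: H2; rewrite (diff_uniq Hr Hr' E E').
Qed.
Arguments F2 {t n D b0 l g r}.

Lemma Splus_pos t n b a : isPos t n b -> Splus t n b a -> isPos t n a /\ rcol a = rcol b.
Proof.
case: t; case: b => [i j|i j|i|i] //=; try by move=> _ [[Ha _] Hc].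
move=> [_ /andP [H1 H2]] [l [/andP [H3 H4] ->]] /=; split => //.
Qed.
Arguments Splus_pos {t n b a}.

Lemma orth t n D a b : orthogonal_set t n D -> D a -> D b -> a <> b -> dzf a (vz b) = Z0.
Proof. by case=> Hp Ho Da Db Hne; apply: (dz0 _ _ _ _ (Hp _ Da)); apply: Ho. Qed.
Arguments orth {t n D a b}.

Lemma diff_of_sum r a b : is_sum r a b -> is_diff b r a.
Proof. by move=> H; apply: of_VD => k; rewrite (VS_of H); lia. Qed.
Arguments diff_of_sum {r a b}.
Lemma diff_swap r a b : is_diff r a b -> is_diff b a r.
Proof. by move=> H; apply: of_VD => k; rewrite (VD_of H); lia. Qed.
Arguments diff_swap {r a b}.

Lemma stepW t n D b0 j w d : orthogonal_set t n D -> D b0 -> rcol b0 = j -> isPos t n w -> is_diff w b0 d ->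
  isPos t n d -> rcol d <> j -> ~ Mset t n D d ->
  exists b r, D b /\ (rcol b < j)%N /\ isPos t n r /\ is_diff r b w.
Proof.
move=> hD Db Hc Hw E Hd Hcd HM.
have Hs : Sminus t n b0 d.
  split; first by split => //; exists w.
  by move=> Hsp; apply: Hcd; rewrite -Hc; case: (Splus_pos (hD.1 _ Db) Hsp).
case: (F2 Db Hc Hs Hw E) => H; first by case: HM; apply: Mlt_Mset H.
case: (Mlt_ex H) => l [Hl [b [Db' [Hcb [[[_ [r [Hr Er]]] _] _]]]]].
by exists b, r; rewrite Hcb.
Qed.
Arguments stepW {t n D b0 j w d}.
Arguments VD_of {r a b}.
Arguments VS_of {r a b}.
Arguments of_VD {r a b}.
Arguments isPosP_of {t n r}.
Arguments isPos_of {t n r}.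

Lemma partA t n D (hD : orthogonal_set t n D) :
  forall (j : nat) (beta alpha : proot),
     D beta -> rcol beta = j -> Splus t n beta alpha ->
     (exists r, is_diff r beta alpha /\ Mcol t n D j r) ->
     forall beta' delta, D beta' -> isPos t n delta ->
       is_sum beta' alpha delta -> rcol beta' = j.
Proof.
move=> j b a Db Hcb Hsp [g [Eg Mg]] b' d Db' Hd Hs.
have Hb := hD.1 _ Db. have Hb' := hD.1 _ Db'.
have [Ha Hca] := Splus_pos Hb Hsp.
case: (Nat.eq_dec (rcol b') j) => // Hne; exfalso.
have Ecs := colsum t n b' a d (isPosP_of Hb') (isPosP_of Ha) (isPosP_of Hd) (VS_of Hs).
rewrite Hca Hcb in Ecs.
have Hld : (rcol d < j)%coq_nat by lia.
have Hb'l : rcol b' = rcol d by lia.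
have Hbb' : b' <> b by move=> E; apply: Hne; rewrite E.
have O1 := orth hD Db' Db Hbb'.
have [pb zb] := pos_col _ _ _ (isPosP_of Hb). rewrite Hcb in pb zb.
have Hdl : d = Rm (rcol d) j.
  exact: (A1 t n a d b' j (vz b) (isPosP_of Ha) (isPosP_of Hd) (isPosP_of Hb')
            (etrans Hca Hcb) Hld (VS_of Hs) pb (zb _ Hld) O1).
case: Mg => b0 [Db0 [Hc0 [[[Hg [r0 [Hr0 Er0]]] Nsp] [NU Hw]]]].
have Hb0 : b0 = b.
  case: (classic (b0 = b)) => // Hne0.
  apply: (A0 t n b a g b0 r0 (isPosP_of Hb) (isPosP_of Ha) (isPosP_of Hg)
           (isPosP_of (hD.1 _ Db0)) (isPosP_of Hr0) Hca (VD_of Eg) _ (VD_of Er0)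
           (orth hD Db0 Db Hne0)).
  by rewrite Hc0 Hcb.
subst b0.
have NA : ~ Mlt t n D j a := Hw a Ha (diff_swap Eg).
have Hsm : Sminus t n b' a.
  split; first by split => //; exists d; split => //; exact: diff_of_sum Hs.
  by move=> Hsp'; case: (Splus_pos Hb' Hsp') => _ H; apply: Hne; rewrite -H Hca.
case: (F2 Db' (erefl _) Hsm Hd (diff_of_sum Hs)) => HM.
  by apply: NA; apply: (Mlt_le _ HM); apply/leP; lia.
case: (Mlt_ex HM) => l' [Hl' [b'' [Db'' [Hc'' [[[_ [r'' [Hr'' Er'']]] _] _]]]]].
rewrite Hdl in Er''.
move/leP: Hl' => Hl'.
have Hb'' := hD.1 _ Db''.
case: (A2 t n b'' r'' (rcol d) j (isPosP_of Hb'') (isPosP_of Hr'') ltac:(lia) Hld (VD_of Er'')) => E.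
- have Hne2 : b'' <> b by move=> E2; rewrite E2 in Hc''; lia.
  have O2 := orth hD Db'' Db Hne2. rewrite E /= in O2.
  have := zb (rcol b'') ltac:(lia). lia.
- have Hne2 : b'' <> b' by move=> E2; rewrite E2 in Hc''; lia.
  have O2 := orth hD Db'' Db' Hne2. rewrite E /= in O2.
  have [pb' zb'] := pos_col _ _ _ (isPosP_of Hb').
  rewrite Hb'l in pb' zb'.
  have := zb' (rcol b'') ltac:(lia). lia.
Qed.

Lemma Splus_nonC t n b g : t <> TC -> S_ t n b g -> rcol g = rcol b -> Splus t n b g.
Proof. by case: t => // _; case: b. Qed.

Ltac vdsolve := apply: of_VD => ?; cbn [vz b2z]; brute2.

Lemma partB t n D (hD : orthogonal_set t n D) (hA : assumptionA t D) :
  forall (j : nat) (beta beta' gamma : proot),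
     D beta -> D beta' -> beta <> beta' -> rcol beta = j -> rcol beta' = j ->
     (forall r, D r -> rcol r = j -> r = beta \/ r = beta') ->
     Mcol t n D j gamma ->
     (rcol gamma)%:Z <> rrow beta -> (rcol gamma)%:Z <> - rrow beta ->
     forall rho delta, D rho -> Pset t n D delta ->
       is_sum rho gamma delta -> rcol rho = j.
Proof.
move=> j b b' g Db Db' Hne Hc Hc' Honly Mg Hr1 Hr2 rho d Drho [Hd NMd] Hs.
have Hb := hD.1 _ Db. have Hb' := hD.1 _ Db'.
have O := orth hD Db Db' Hne.
move: (B0 t n b b' (isPosP_of Hb) (isPosP_of Hb') (etrans Hc (esym Hc')) O).
rewrite Hc; move: (snd_idx b) => k HB0.
have [Dm [Dp Hgk]] : D (Rm j k) /\ D (Rp j k) /\ rcol g <> k.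
  case: HB0 => [[Eb Eb']|[Eb Eb']]; rewrite -Eb -Eb'; do 2! (split => //).
  - by move=> E; apply: Hr1; rewrite Eb E.
  - by move=> E; apply: Hr2; rewrite Eb /= opprK E.
have [Hj1 [Hjk Hkn]] : (1 <= j /\ j < k /\ k <= n)%coq_nat := isPosP_of (hD.1 _ Dm).
have Ht : t <> TC.
  by move=> Ht; apply: (hA.2 Ht j k); [apply/ltP | split].
have Hrho := hD.1 _ Drho.
case: (Nat.eq_dec (rcol rho) j) => // Hne'; exfalso.
have Ej : vz rho j = Z0 /\ vz rho k = Z0.
  have N1 : Rm j k <> rho by move=> E; apply: Hne'; rewrite -E.
  have N2 : Rp j k <> rho by move=> E; apply: Hne'; rewrite -E.
  have := orth hD Dm Drho N1; have := orth hD Dp Drho N2; cbn [dzf]; lia.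
case: Ej => Ej Ek.
case: Mg => b0 [Db0 [Hc0 [[[Hg [r0 [Hr0 Er0]]] Nsp] [NU Hw]]]].
have Hgj : rcol g <> j.
  by move=> E; apply: Nsp; apply: Splus_nonC => //; [split => //; exists r0 | rewrite Hc0].
have [x [Hjx [Hxk [Egx Hshape]]]] : exists x, (j < x)%coq_nat /\ (x < k)%coq_nat /\ rcol g = x /\
   ((g = Rm x k /\ b0 = Rm j k) \/ (g = Rp x k /\ b0 = Rp j k)).
  have Hb0s : b0 = Rm j k \/ b0 = Rp j k.
    by case: (Honly b0 Db0 Hc0) => ->; case: HB0 => [[E1 E2]|[E1 E2]]; rewrite ?E1 ?E2; auto.
  case: Hb0s => Eb0; rewrite Eb0 in Er0.
  - have [Eg [h1 h2]] := B1m t n j k g r0 (isPosP_of Hg) (isPosP_of Hr0) Hjk (VD_of Er0) Hgj.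
    by exists (rcol g); do 3! split => //; left.
  - have [Eg [h1 h2]] := B1p t n j k g r0 (isPosP_of Hg) (isPosP_of Hr0) Hjk (VD_of Er0) Hgj Hgk.
    by exists (rcol g); do 3! split => //; right.
have Ecs := colsum t n rho g d (isPosP_of Hrho) (isPosP_of Hg) (isPosP_of Hd) (VS_of Hs).
rewrite Egx in Ecs.
case: (Nat.lt_total (rcol d) j) => [Hlt|[Heq|Hgt]].
- have Hsm : Sminus t n rho g.
    split; first by split => //; exists d; split => //; exact: diff_of_sum Hs.
    by move=> Hsp; case: (Splus_pos Hrho Hsp) => _ E; lia.
  case: (F2 Drho (erefl _) Hsm Hd (diff_of_sum Hs)) => HM.
  + by apply: NU; apply: (Mlt_le _ HM); apply/leP; lia.
  + by apply: NMd; apply: Mlt_Mset HM.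
- lia.
have Hdj : rcol d <> j by lia.
have Hrj : (j < rcol rho)%coq_nat by lia.
have Hpm := isPosP_of (hD.1 _ Dm).
case: Hshape => [[Eg Eb0]|[Eg Eb0]]; subst g.
- have HB2 := B2m t n j x k rho d Ht Hjx Hxk (isPosP_of Hrho) (isPosP_of Hd) (VS_of Hs) Ej Ek Hgt.
  move: HB2; move: (snd_idx d) => y; move Ey: (rcol d) => y'.
  case=> [[Ed Er]|[[Ed Er]|[[Ed Er]|[Ed Er]]]]; subst d;
    have Hdp := isPosP_of Hd; move: Hdp Hgt Hdj => /= Hdp Hgt Hdj.
  + subst rho.
    have HwP : isPos t n (Rm j y) by apply: isPos_of; cbn; lia.
    have Ew : is_diff (Rm j y) (Rp j k) (Rp k y) by vdsolve.
    case: (stepW hD Dp (erefl _) HwP Ew Hd Hdj NMd) => b2 [r2 [Db2 [Hc2 [Hr2' Er2]]]].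
    move/leP: Hc2 => /= Hc2.
    have N1 : b2 <> Rp x y by move=> E; rewrite E /= in Hc2; lia.
    have N2 : b2 <> Rp j k by move=> E; rewrite E /= in Hc2; lia.
    exact: (B3m t n j k x y (Rp x y) b2 r2 (isPosP_of (hD.1 _ Db2)) (isPosP_of Hr2')
      (VD_of Er2) Hc2 Hjk Hjx ltac:(lia) (or_introl erefl) (orth hD Db2 Drho N1) (orth hD Db2 Dp N2)).
  + have HwP : isPos t n (Rm j y') by apply: isPos_of; cbn; lia.
    have Ew : is_diff (Rm j y') (Rp j k) (Rp y' k) by vdsolve.
    case: (stepW hD Dp (erefl _) HwP Ew Hd Hdj NMd) => b2 [r2 [Db2 [Hc2 [Hr2' Er2]]]].
    move/leP: Hc2 => /= Hc2.
    have N1 : b2 <> rho by move=> E; rewrite E in Hc2; lia.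
    have N2 : b2 <> Rp j k by move=> E; rewrite E /= in Hc2; lia.
    exact: (B3m t n j k x y' rho b2 r2 (isPosP_of (hD.1 _ Db2)) (isPosP_of Hr2')
      (VD_of Er2) Hc2 Hjk Hjx ltac:(lia) Er (orth hD Db2 Drho N1) (orth hD Db2 Dp N2)).
  + subst rho.
    have Hxy := isPosP_of Hrho; move: Hxy => /= Hxy.
    have HwP : isPos t n (Rp j y) by apply: isPos_of; cbn; lia.
    have Ew : is_diff (Rp j y) (Rp j k) (Rm k y) by vdsolve.
    case: (stepW hD Dp (erefl _) HwP Ew Hd Hdj NMd) => b2 [r2 [Db2 [Hc2 [Hr2' Er2]]]].
    move/leP: Hc2 => /= Hc2.
    have N1 : b2 <> Rm x y by move=> E; rewrite E /= in Hc2; lia.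
    have N2 : b2 <> Rp j k by move=> E; rewrite E /= in Hc2; lia.
    exact: (B3p t n j k x y b2 r2 (isPosP_of (hD.1 _ Db2)) (isPosP_of Hr2')
      (VD_of Er2) Hc2 Hjk Hjx ltac:(lia) (orth hD Db2 Drho N1) (orth hD Db2 Dp N2)).
  + subst rho.
    case: Hdp => HtB Hdp.
    have HwP : isPos t n (Rs j) by apply: isPos_of; cbn; split => //; lia.
    have Ew : is_diff (Rs j) (Rp j k) (Rs k) by vdsolve.
    case: (stepW hD Dp (erefl _) HwP Ew Hd Hdj NMd) => b2 [r2 [Db2 [Hc2 [Hr2' Er2]]]].
    move/leP: Hc2 => /= Hc2.
    have N2 : b2 <> Rp j k by move=> E; rewrite E /= in Hc2; lia.
    have := B3s t n j k x b2 r2 (isPosP_of (hD.1 _ Db2)) (isPosP_of Hr2').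
    move=> HH; have := HH (VD_of Er2). move=> {}HH; have := HH Hc2 Hjk Hjx. move=> {}HH.
    apply: (HH _ (orth hD Db2 Dp N2)); clear HH.
    by move: Db2; case: (b2) => // i Di; exact: (hA.1 HtB i x Di Drho).
- have HB2 := B2p t n j x k rho d Ht Hjx Hxk (isPosP_of Hrho) (isPosP_of Hd) (VS_of Hs) Ej Ek Hgt.
  move: HB2; move Ey: (rcol d) => y'.
  case=> Ed Er; subst d.
  have Hdp := isPosP_of Hd; move: Hdp Hgt Hdj => /= Hdp Hgt Hdj.
  have HwP : isPos t n (Rm j y') by apply: isPos_of; cbn; lia.
  have Ew : is_diff (Rm j y') (Rm j k) (Rm y' k) by vdsolve.
  case: (stepW hD Dm (erefl _) HwP Ew Hd Hdj NMd) => b2 [r2 [Db2 [Hc2 [Hr2' Er2]]]].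
  move/leP: Hc2 => /= Hc2.
  have N1 : b2 <> rho by move=> E; rewrite E in Hc2; lia.
  have N2 : b2 <> Rp j k by move=> E; rewrite E /= in Hc2; lia.
  exact: (B3m t n j k x y' rho b2 r2 (isPosP_of (hD.1 _ Db2)) (isPosP_of Hr2')
    (VD_of Er2) Hc2 Hjk Hjx ltac:(lia) Er (orth hD Db2 Drho N1) (orth hD Db2 Dp N2)).
Qed.

Theorem lemma2p7 (t : rtype) (n : nat) (D : proot -> Prop)
  (hD : orthogonal_set t n D) (hA : assumptionA t D) :
  (* (a) *)
  (forall (j : nat) (beta alpha : proot),
     D beta -> rcol beta = j -> Splus t n beta alpha ->
     (exists r, is_diff r beta alpha /\ Mcol t n D j r) ->
     forall beta' delta, D beta' -> isPos t n delta ->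
       is_sum beta' alpha delta -> rcol beta' = j) /\
  (* (b) *)
  (forall (j : nat) (beta beta' gamma : proot),
     D beta -> D beta' -> beta <> beta' -> rcol beta = j -> rcol beta' = j ->
     (forall r, D r -> rcol r = j -> r = beta \/ r = beta') ->
     Mcol t n D j gamma ->
     (rcol gamma)%:Z <> rrow beta -> (rcol gamma)%:Z <> - rrow beta ->
     forall rho delta, D rho -> Pset t n D delta ->
       is_sum rho gamma delta -> rcol rho = j).
Proof. split; [exact: partA | exact: partB]. Qed.
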